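(* Let $G_1,\dots,G_n$ be rooted graphs and let $G$ be the decorated path obtained from them, with path vertices $1,\dots,n$. Assume that $\alpha_i^{G_i}=\alpha_{n+1-i}^{G_{n+1-i}}$ for all $i\in\{1,\dots,n\}$. Then $\alpha_1^G=\alpha_n^G$.
   Context: Graphs are finite and simple. For a graph $H$, $\phi^H$ is the characteristic polynomial of its adjacency matrix (variable $x$), and for a vertex $i$ of $H$, $\alpha_i^H=\phi^H/\phi^{H\setminus i}$ as a rational function. A rooted graph is a graph with a distinguished vertex (its root). The decorated path built from rooted graphs $G_1,\dots,G_n$ (pairwise disjoint) is obtained from the path on vertices $1,\dots,n$ (with $i\sim i+1$) by identifying the root of $G_i$ with vertex $i$. The root of $G_i$ is thus called $i$, and $\alpha_i^{G_i}$ is taken at that root. *)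

(* Defs.v *)
From HB Require Import structures.
From mathcomp Require Import all_boot all_order all_algebra.
From mathcomp Require Import fraction.
Set Implicit Arguments. Unset Strict Implicit. Unset Printing Implicit Defensive.
Import Order.TTheory GRing.Theory Num.Theory.
Local Open Scope ring_scope.

Definition simple_graph (V : finType) (e : rel V) : Prop :=
  symmetric e /\ irreflexive e.

(* adjacency matrix, vertices listed via enum (char. poly is invariant
   under relabelling) *)
Definition adjmx (V : finType) (e : rel V) : 'M[rat]_#|V| :=
  \matrix_(i, j) ((e (enum_val i) (enum_val j))%:R).

Definition phi (V : finType) (e : rel V) : {poly rat} := char_poly (adjmx e).

Definition delV (V : finType) (v : V) : finType := {x : V | x != v}.
Definition del_rel (V : finType) (e : rel V) (v : V) : rel (delV v) :=
  fun x y => e (val x) (val y).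
Arguments del_rel {V} e v.

Definition alpha (V : finType) (e : rel V) (v : V) : {fraction {poly rat}} :=
  FracField.tofrac (phi e) / FracField.tofrac (@phi (delV v) (del_rel e v)).

(* Decorated path built from rooted graphs (V i, e i, r i), i : 'I_m:
   disjoint union of the G_i plus edges r_i -- r_(i+1). *)
Definition dpath_rel (m : nat) (V : 'I_m -> finType) (e : forall i, rel (V i))
  (r : forall i, V i) : rel {i : 'I_m & V i} :=
  fun x y =>
    match x, y with
    | existT i a, existT j b =>
        (if i =P j is ReflectT E then
           e j (eq_rect i V a j E) b else false)
        || [&& a == r i, b == r j & ((i.+1 == j :> nat) || (j.+1 == i :> nat))]
    end.

(* Main.v *)
Require Import Defs.
From HB Require Import structures.
From mathcomp Require Import all_boot all_order all_algebra all_fingroup.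
From mathcomp Require Import fraction zify ring.
Set Implicit Arguments. Unset Strict Implicit. Unset Printing Implicit Defensive.
Import Order.TTheory GRing.Theory Num.Theory.
Local Open Scope ring_scope.
Section Dm.
Variables (R : comNzRingType) (T : finType).
Implicit Types (N : T -> T -> R) (S A B : {set T}).

Definition Dm N S : R :=
  \det (\matrix_(i, j) N (@enum_val T (mem S) i) (@enum_val T (mem S) j)).

Lemma det_permconj n (s : 'S_n) (M : 'M[R]_n) :
  \det (\matrix_(i, j) M (s i) (s j)) = \det M.
Proof.
have -> : \matrix_(i, j) M (s i) (s j) = row_perm s (col_perm s M).
  by apply/matrixP => i j; rewrite !mxE.
rewrite row_permE col_permE !det_mulmx !det_perm odd_permV.
by rewrite mulrCA mulrA -mulrA -signr_addb addbb mulr1.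
Qed.

Lemma Dm_enum k (f : 'I_k -> T) N S : injective f ->
  (forall t, (t \in S) = (t \in codom f)) ->
  \det (\matrix_(i, j) N (f i) (f j)) = Dm N S.
Proof.
move=> finj fS.
have Hk : k = #|S|.
  by rewrite (eq_card fS) card_codom // card_ord.
subst k.
have HS i : f i \in S by rewrite fS codom_f.
pose sg i := enum_rank_in (HS i) (f i).
have sgE i : enum_val (sg i) = f i by rewrite /sg enum_rankK_in.
have sginj : injective sg.
  by move=> i j /(congr1 (@enum_val T (mem S))); rewrite !sgE => /finj.
rewrite /Dm -[RHS](det_permconj (perm sginj)); congr (\det _).
by apply/matrixP => i j; rewrite !mxE !permE !sgE.
Qed.

Lemma Dm_eq N N' S : {in S &, N =2 N'} -> Dm N S = Dm N' S.
Proof.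
move=> H; rewrite /Dm; congr (\det _); apply/matrixP => i j.
by rewrite !mxE H // enum_valP.
Qed.

Lemma Dm0 N : Dm N set0 = 1.
Proof.
have f : 'I_0 -> T by case=> m Hm; exfalso; rewrite ltn0 in Hm.
rewrite -(@Dm_enum 0 f) ?det_mx00 //; first by case.
by move=> t; rewrite inE; apply/esym/negbTE/negP => /codomP [[]].
Qed.

Definition maskN N (t0 : T) (P : pred T) : T -> T -> R :=
  fun t u => if t == t0 then (if P u then N t u else 0) else N t u.

Lemma Dm_mask N S t0 (P : pred T) : t0 \in S ->
  Dm N S = Dm (maskN N t0 P) S + Dm (maskN N t0 (predC P)) S.
Proof.
move=> t0S; rewrite /Dm.
rewrite (@determinant_multilinear _ _ _ (\matrix_(i, j) maskN N t0 P (enum_val i) (enum_val j)) (\matrix_(i, j) maskN N t0 (predC P) (enum_val i) (enum_val j)) (enum_rank_in t0S t0) 1 1) ?mul1r //.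
- apply/rowP => j; rewrite !mxE !mul1r enum_rankK_in // /maskN eqxx /=.
  by case: (P _); rewrite /= ?addr0 ?add0r.
- apply/matrixP => i j; rewrite !mxE /maskN.
  case: eqP => // E; exfalso; move/(congr1 (enum_rank_in t0S)): E.
  by rewrite enum_valK_in => /eqP; apply/negP; rewrite eq_sym neq_lift.
- apply/matrixP => i j; rewrite !mxE /maskN.
  case: eqP => // E; exfalso; move/(congr1 (enum_rank_in t0S)): E.
  by rewrite enum_valK_in => /eqP; apply/negP; rewrite eq_sym neq_lift.
Qed.


Lemma Dm_block N A B : [disjoint A & B] ->
  {in A & B, forall a b, N a b = 0} ->
  Dm N (A :|: B) = Dm N A * Dm N B.
Proof.
move=> dAB NAB.
pose f (i : 'I_(#|A| + #|B|)) : T := match split i with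
  | inl j => @enum_val T (mem A) j | inr j => @enum_val T (mem B) j end.
have finj : injective f.
  move=> i j; rewrite -(splitK i) -(splitK j) /f !unsplitK.
  case: (split i) => i'; case: (split j) => j' E.
  - by rewrite (enum_val_inj E).
  - by move: (enum_valP i') (disjointFr dAB (enum_valP i')); rewrite E enum_valP.
  - by move: (enum_valP j') (disjointFr dAB (enum_valP j')); rewrite -E enum_valP.
  - by rewrite (enum_val_inj E).
have fS : forall t, (t \in A :|: B) = (t \in codom f).
  move=> t; rewrite inE; apply/idP/idP.
  - case/orP => tA; apply/codomP.
      by exists (lshift #|B| (enum_rank_in tA t)); rewrite /f -[lshift _ _]/(unsplit (inl _)) unsplitK enum_rankK_in.
    by exists (rshift #|A| (enum_rank_in tA t)); rewrite /f -[rshift _ _]/(unsplit (inr _)) unsplitK enum_rankK_in.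
  - case/codomP => i ->; rewrite /f; case: (split i) => j; by rewrite enum_valP ?orbT.
rewrite -(Dm_enum N finj fS).
have -> : \matrix_(i, j) N (f i) (f j) = block_mx
   (\matrix_(i, j) N (@enum_val T (mem A) i) (@enum_val T (mem A) j)) 0
   (\matrix_(i, j) N (@enum_val T (mem B) i) (@enum_val T (mem A) j))
   (\matrix_(i, j) N (@enum_val T (mem B) i) (@enum_val T (mem B) j)).
  apply/matrixP => i j; rewrite -(splitK i) -(splitK j) mxE /f !unsplitK.
  case: (split i) => i'; case: (split j) => j' /=.
  - by rewrite block_mxEul mxE.
  - by rewrite block_mxEur mxE NAB // enum_valP.
  - by rewrite block_mxEdl mxE.
  - by rewrite block_mxEdr mxE.
by rewrite det_lblock.
Qed.

Lemma Dm_row0 N S t0 : t0 \in S -> {in S, forall u, N t0 u = 0} -> Dm N S = 0.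
Proof.
move=> t0S H; rewrite /Dm (expand_det_row _ (enum_rank_in t0S t0)) big1 // => j _.
by rewrite mxE enum_rankK_in // H ?mul0r // enum_valP.
Qed.

Lemma Dm2 N a b : a != b -> N a a = 0 -> N b b = 0 ->
  Dm N [set a; b] = - (N a b * N b a).
Proof.
move=> ab Naa Nbb.
pose f (i : 'I_2) : T := if val i == 0%N then a else b.
have finj : injective f.
  move=> [[|[|i]] Hi] [[|[|j]] Hj] //=; rewrite /f /=;
  try (by move=> _; apply/val_inj);
  by move/eqP; rewrite ?(negPf ab) // eq_sym (negPf ab).
have fS : forall t, (t \in [set a; b]) = (t \in codom f).
  move=> t; rewrite !inE; apply/idP/idP.
  - by case/orP => /eqP ->; apply/codomP; [exists ord0 | exists (@Ordinal 2 1 isT)].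
  - by case/codomP => -[[|[|i]] Hi] //= -> ; rewrite /f /= eqxx ?orbT.
rewrite -(Dm_enum N finj fS) (expand_det_row _ ord0) !big_ord_recl big_ord0.
rewrite /cofactor !det_mx11 !mxE /f /= Naa Nbb /bump /=.
by rewrite !mul0r add0r addr0 expr1 mulN1r mulrN.
Qed.

Lemma mkdisj A B : (forall t, t \in A -> t \in B -> False) -> [disjoint A & B].
Proof.
move=> H; rewrite disjoints_subset; apply/subsetP => t tA; rewrite inE.
by apply/negP => /(H t tA).
Qed.

Lemma Dm_bridge N A B a0 b0 : [disjoint A & B] -> a0 \in A -> b0 \in B ->
  {in A & B, forall a b, (a != a0) || (b != b0) -> N a b = 0} ->
  {in B & A, forall b a, (a != a0) || (b != b0) -> N b a = 0} ->
  Dm N (A :|: B) =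
  Dm N A * Dm N B - N a0 b0 * N b0 a0 * (Dm N (A :\ a0) * Dm N (B :\ b0)).
Proof.
move=> dAB a0A b0B HAB HBA.
have nB a : a \in A -> (a \in B) = false by move/(disjointFr dAB).
have nA b : b \in B -> (b \in A) = false by move/(disjointFl dAB).
have a0b0 : (a0 == b0) = false by apply/negbTE/eqP => E; move: (nB _ a0A); rewrite E b0B.
have b0a0 : (b0 == a0) = false by rewrite eq_sym.
have a0S : a0 \in A :|: B by rewrite inE a0A.
have b0S : b0 \in A :|: B by rewrite inE b0B orbT.
rewrite (Dm_mask N (mem B) a0S).
rewrite (Dm_mask (maskN N a0 (mem B)) (mem A) b0S).
rewrite (Dm_mask (maskN N a0 (predC (mem B))) (mem A) b0S).
set N22 := maskN (maskN N a0 (mem B)) b0 (mem A).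
set N21 := maskN (maskN N a0 (mem B)) b0 (predC (mem A)).
set N12 := maskN (maskN N a0 (predC (mem B))) b0 (mem A).
set N11 := maskN (maskN N a0 (predC (mem B))) b0 (predC (mem A)).
have E11 : Dm N11 (A :|: B) = Dm N A * Dm N B.
  rewrite Dm_block //.
  - congr (_ * _); apply: Dm_eq.
    + move=> a a' aA a'A; rewrite /N11 /maskN /=.
      have -> : (a == b0) = false by apply/negbTE/eqP => E; move: (nB _ aA); rewrite E b0B.
      by case: eqP => // _; rewrite ?inE nB.
    + move=> b b' bB b'B; rewrite /N11 /maskN /=.
      have -> : (b == a0) = false by apply/negbTE/eqP => E; move: (nA _ bB); rewrite E a0A.
      by case: eqP => // _; rewrite ?inE nA.
  - move=> a b aA bB; rewrite /N11 /maskN /=.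
    have -> : (a == b0) = false by apply/negbTE/eqP => E; move: (nB _ aA); rewrite E b0B.
    case: eqP => [_|/eqP aa0]; first by rewrite ?inE bB.
    by apply: HAB => //; rewrite aa0.
have E12 : Dm N12 (A :|: B) = 0.
  rewrite Dm_block //; last first.
    move=> a b aA bB; rewrite /N12 /maskN /=.
    have -> : (a == b0) = false by apply/negbTE/eqP => E; move: (nB _ aA); rewrite E b0B.
    case: eqP => [_|/eqP aa0]; first by rewrite ?inE bB.
    by apply: HAB => //; rewrite aa0.
  rewrite (@Dm_row0 N12 B b0) ?mulr0 // => u uB.
  by rewrite /N12 /maskN eqxx inE nA.
have E21 : Dm N21 (A :|: B) = 0.
  rewrite setUC Dm_block //; last first.
    move=> b a bB aA; rewrite /N21 /maskN /=.
    have -> : (b == a0) = false by apply/negbTE/eqP => E; move: (nA _ bB); rewrite E a0A.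
    case: eqP => [_|/eqP bb0]; first by rewrite ?inE aA.
    by apply: HBA => //; rewrite bb0 orbT.
    by rewrite disjoint_sym.
  rewrite (@Dm_row0 N21 A a0) ?mulr0 // => u uA.
  by rewrite /N21 /maskN a0b0 eqxx ?inE nB.
have E22 : Dm N22 (A :|: B) =
    - (N a0 b0 * N b0 a0) * (Dm N (A :\ a0) * Dm N (B :\ b0)).
  have -> : A :|: B = [set a0; b0] :|: ((A :\ a0) :|: (B :\ b0)).
    apply/setP => t; rewrite !inE.
    case: (t =P a0) => [->|_]; first by rewrite a0A.
    by case: (t =P b0) => [->|_]; rewrite ?b0B ?orbT.
  rewrite Dm_block //; last first.
    move=> t u; rewrite !inE => /orP [] /eqP -> /orP [] /andP [un uS];
      rewrite /N22 /maskN ?a0b0 ?b0a0 ?eqxx /= ?uS ?(nB _ uS) ?(nA _ uS) //;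
      first [by apply: HAB; rewrite ?un ?orbT | by apply: HBA; rewrite ?un ?orbT].
    apply: mkdisj => t; rewrite !inE => /orP [] /eqP -> /orP [] /andP [];
      by rewrite ?eqxx ?(nB _ a0A) ?(nA _ b0B).
  rewrite Dm2 ?a0b0 //; last 2 first.
    - by rewrite /N22 /maskN a0b0 eqxx inE nB.
    - by rewrite /N22 /maskN eqxx inE nA.
  rewrite /N22 /maskN a0b0 eqxx !inE a0A b0B b0a0 /= ?eqxx; congr (_ * _).
  rewrite Dm_block.
  - have Ab0 t : t \in A -> (t == b0) = false.
      by move=> tA; apply/negbTE/eqP => E; move: (nB _ tA); rewrite E b0B.
    have Ba0 t : t \in B -> (t == a0) = false.
      by move=> tB; apply/negbTE/eqP => E; move: (nA _ tB); rewrite E a0A.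
    congr (_ * _); apply: Dm_eq => t u; rewrite !inE => /andP [tn tS] _;
      rewrite /N22 /maskN ?(Ab0 _ tS) ?(Ba0 _ tS) ?(negPf tn) //.
  - apply: mkdisj => t; rewrite !inE => /andP [_ tA] /andP [_ tB].
    by move: (nB _ tA); rewrite tB.
  - move=> t u; rewrite !inE => /andP [ta0 tA] /andP [ub0 uB].
    rewrite /N22 /maskN (negPf ta0); have -> : (t == b0) = false by apply/negbTE/eqP => E; move: (nB _ tA); rewrite E b0B.
    by apply: HAB => //; rewrite ta0.
by rewrite E11 E12 E21 E22 addr0 add0r mulNr addrC.
Qed.

End Dm.


Lemma Dm_img (R : comNzRingType) (U T : finType) (g : U -> T) (N : T -> T -> R)
  (S : {set U}) : injective g ->
  Dm (fun x y => N (g x) (g y)) S = Dm N (g @: S).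
Proof.
move=> ginj; rewrite {1}/Dm.
rewrite (@Dm_enum R T _ (fun i => g (@enum_val U (mem S) i)) N (g @: S)) //.
- by move=> i j /ginj /enum_val_inj.
- move=> t; apply/imsetP/codomP => [[x xS ->]|[i ->]].
    by exists (enum_rank_in xS x); rewrite enum_rankK_in.
  by exists (enum_val i); rewrite ?enum_valP.
Qed.

Definition NN (U : finType) (rl : rel U) : U -> U -> {poly rat} :=
  fun t u => 'X *+ (t == u) - ((rl t u)%:R : rat)%:P.

Lemma phi_Dm (U : finType) (rl : rel U) : phi rl = Dm (NN rl) setT.
Proof.
rewrite /phi /char_poly.
rewrite -(@Dm_enum _ U _ (@enum_val U (mem U))).
- congr (\det _); apply/matrixP => i j; rewrite !mxE /NN.
  by rewrite (inj_eq enum_val_inj).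
- exact: enum_val_inj.
- move=> t; rewrite inE; apply/esym/codomP; exists (enum_rank t).
  by rewrite enum_rankK.
Qed.

Lemma phi_del (U : finType) (rl : rel U) v : phi (del_rel rl v) = Dm (NN rl) [set~ v].
Proof.
rewrite phi_Dm.
rewrite (@Dm_eq _ _ _ (fun x y => NN rl (val x) (val y))); last first.
  by move=> x y _ _; rewrite /NN /del_rel.
rewrite Dm_img; last exact: val_inj.
congr Dm; apply/setP => t; rewrite !inE; apply/imsetP/idP => [[x _ ->]|tv].
  exact: (valP x).
by exists (Sub t tv : delV v).
Qed.

Unset Implicit Arguments.
Section Graph.
Variables (n : nat) (V : 'I_n.+1 -> finType) (e : forall i, rel (V i))
  (r : forall i, V i).
Local Notation T := {i : 'I_n.+1 & V i}.
Local Notation G := (dpath_rel e r).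
Local Notation NG := (NN (dpath_rel e r)).

Definition root (i : 'I_n.+1) : T := existT V i (r i).

Lemma G_same i x y : G (existT V i x) (existT V i y) = e i x y.
Proof.
rewrite /dpath_rel; case: eqP => [E|]; last by [].
rewrite (eq_irrelevance E erefl) /= orbb.
have -> : (i.+1 == i :> nat) = false by apply/eqP; lia.
by rewrite !andbF orbF.
Qed.

Lemma G_cross a b : tag a != tag b ->
  G a b = [&& a == root (tag a), b == root (tag b) &
             ((tag a).+1 == tag b :> nat) || ((tag b).+1 == tag a :> nat)].
Proof.
case: a => i x; case: b => j y /= ij.
rewrite /dpath_rel; case: eqP => [E|_]; first by rewrite E eqxx in ij.
by rewrite /root /= !eq_Tagged.
Qed.

Lemma NG_cross a b : tag a != tag b ->
  (a != root (tag a)) || (b != root (tag b)) ||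
  ~~ (((tag a).+1 == tag b :> nat) || ((tag b).+1 == tag a :> nat)) ->
  NG a b = 0.
Proof.
move=> ab H; rewrite /NN G_cross //.
have -> : (a == b) = false by apply/negbTE; apply: contra ab => /eqP ->.
rewrite (_ : [&& _, _ & _] = false); first by rewrite /= !mulr0n polyC0 subr0. apply/negbTE; move: H; case: (a == root (tag a)); case: (b == root (tag b)) => //=; exact: id.
Qed.

Lemma NG_root_adj (i j : 'I_n.+1) : (i.+1 == j :> nat) ->
  NG (root i) (root j) = -1 /\ NG (root j) (root i) = -1.
Proof.
move=> ij; have ne : i != j by apply: contraTneq ij => ->; apply/eqP; lia.
have ne' : j != i by rewrite eq_sym.
rewrite /NN !G_cross // /= !eqxx ij orbT /=.
have -> : (root i == root j) = false by apply/negbTE; apply: contra ne => /eqP/(congr1 tag) /= ->.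
have -> : (root j == root i) = false by apply/negbTE; apply: contra ne' => /eqP/(congr1 tag) /= ->.
by rewrite !mulr0n sub0r.
Qed.

Definition Iv (lo hi : nat) : {set T} := [set t : T | (lo <= tag t < hi)%N].
Definition Dv lo hi := Dm NG (Iv lo hi).
Definition pp (k : nat) := phi (e (inord k)).
Definition qq (k : nat) := phi (del_rel (e (inord k)) (r (inord k))).

Lemma Iv_comp k : (k <= n)%N ->
  Iv k k.+1 = (fun x => existT V (inord k) x) @: [set: V (inord k)].
Proof.
move=> kn; apply/setP => t; rewrite !inE; apply/idP/imsetP.
- case: t => i x /= H.
  have ik : i = inord k by apply/val_inj; rewrite /= inordK; lia.
  subst i; by exists x.
- by case=> x _ -> /=; rewrite inordK; lia.
Qed.

Lemma Tinj i : injective (fun x : V i => existT V i x).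
Proof. by move=> x y /eqP; rewrite eq_Tagged /= => /eqP. Qed.

Lemma Dv_one k : (k <= n)%N -> Dv k k.+1 = pp k.
Proof.
move=> kn; rewrite /Dv Iv_comp // -Dm_img; last exact: Tinj.
rewrite /pp phi_Dm; apply: Dm_eq => x y _ _.
by rewrite /NN G_same (inj_eq (@Tinj _)).
Qed.

Lemma Dv_oneD k : (k <= n)%N -> Dm NG (Iv k k.+1 :\ root (inord k)) = qq k.
Proof.
move=> kn.
have -> : Iv k k.+1 :\ root (inord k) =
   (fun x => existT V (inord k) x) @: [set~ r (inord k)].
  apply/setP => t; rewrite !inE; apply/andP/imsetP.
  - case; case: t => i x tn /= H.
    have ik : i = inord k by apply/val_inj; rewrite /= inordK; lia.
    subst i; exists x => //; rewrite !inE; apply: contra tn => /eqP -> //.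
  - case=> x; rewrite !inE => xr -> /=; split; last by rewrite inordK; lia.
    by rewrite /root eq_Tagged.
rewrite -Dm_img; last exact: Tinj.
rewrite /qq phi_del; apply: Dm_eq => x y _ _.
by rewrite /NN G_same (inj_eq (@Tinj _)).
Qed.

Lemma NG_nonroot a b : tag a != tag b ->
  (a != root (tag a)) || (b != root (tag b)) -> NG a b = 0.
Proof. by move=> ab H; apply: NG_cross => //; rewrite H. Qed.

Lemma tag_inord (t : T) k : (k <= n)%N -> (tag t == inord k :> 'I_n.+1) = (tag t == k :> nat).
Proof. by move=> kn; rewrite -val_eqE /= inordK. Qed.

Lemma Iv_delL lo k : (lo <= k)%N -> (k <= n)%N ->
  Dm NG (Iv lo k.+1 :\ root (inord k)) = Dv lo k * qq k.
Proof.
move=> lok kn.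
have -> : Iv lo k.+1 :\ root (inord k) = Iv lo k :|: (Iv k k.+1 :\ root (inord k)).
  apply/setP => t; rewrite !inE.
  case: (t =P root (inord k)) => [->|_] /=; first by rewrite inordK; lia.
  lia.
rewrite Dm_block ?Dv_oneD //.
- apply: mkdisj => t; rewrite !inE; lia.
- move=> a b; rewrite !inE => Ha /andP [bn Hb].
  apply: NG_nonroot; first by rewrite -val_eqE /=; apply/eqP; lia.
  have -> : tag b = inord k by apply/val_inj; rewrite /= inordK; lia.
  by rewrite bn orbT.
Qed.

Lemma Iv_delR k hi : (k < hi)%N -> (hi <= n.+1)%N ->
  Dm NG (Iv k hi :\ root (inord k)) = qq k * Dv k.+1 hi.
Proof.
move=> khi hin.
have -> : Iv k hi :\ root (inord k) = (Iv k k.+1 :\ root (inord k)) :|: Iv k.+1 hi.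
  apply/setP => t; rewrite !inE.
  case: (t =P root (inord k)) => [->|_] /=; first by rewrite inordK; lia.
  lia.
rewrite Dm_block ?Dv_oneD //; try lia.
- apply: mkdisj => t; rewrite !inE; lia.
- move=> a b; rewrite !inE => /andP [an Ha] Hb.
  apply: NG_nonroot; first by rewrite -val_eqE /=; apply/eqP; lia.
  have -> : tag a = inord k by apply/val_inj; rewrite /= inordK; lia.
  by rewrite an.
Qed.

Lemma Dv_split lo mid hi : (lo < mid)%N -> (mid < hi)%N -> (hi <= n.+1)%N ->
  Dv lo hi = Dv lo mid * Dv mid hi
             - qq mid.-1 * qq mid * (Dv lo mid.-1 * Dv mid.+1 hi).
Proof.
move=> lm mh hn.
have Em : mid.-1.+1 = mid by lia.
have -> : Dv lo hi = Dm NG (Iv lo mid :|: Iv mid hi).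
  by congr Dm; apply/setP => t; rewrite !inE; lia.
have [N1 N2] := @NG_root_adj (inord mid.-1) (inord mid)
  ltac:(rewrite !inordK; lia).
rewrite (@Dm_bridge _ _ NG _ _ (root (inord mid.-1)) (root (inord mid))).
- rewrite N1 N2 mulrNN mul1r.
  have HL := @Iv_delL lo mid.-1 ltac:(lia) ltac:(lia); rewrite Em in HL.
  rewrite HL Iv_delR; try lia.
  rewrite /Dv; congr (_ - _).
  by rewrite mul1r; ring.
- apply: mkdisj => t; rewrite !inE; lia.
- rewrite !inE /= inordK; lia.
- rewrite !inE /= inordK; lia.
- move=> [ia xa] [ib xb]; rewrite !inE /= => Ha Hb H.
  apply: NG_cross; first by rewrite /= -val_eqE /=; apply/eqP; lia.
  rewrite /=; case: (boolP ((ia.+1 == ib :> nat) || (ib.+1 == ia :> nat))) => adj;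
    last by apply/orP; right.
  have E1 : ia = inord mid.-1 by apply/val_inj; rewrite /= inordK; lia.
  have E2 : ib = inord mid by apply/val_inj; rewrite /= inordK; lia.
  subst ia ib; apply/orP; left; exact: H.
- move=> [ib xb] [ia xa]; rewrite !inE /= => Hb Ha H.
  apply: NG_cross; first by rewrite /= -val_eqE /=; apply/eqP; lia.
  rewrite /=; case: (boolP ((ib.+1 == ia :> nat) || (ia.+1 == ib :> nat))) => adj;
    last by apply/orP; right.
  have E1 : ia = inord mid.-1 by apply/val_inj; rewrite /= inordK; lia.
  have E2 : ib = inord mid by apply/val_inj; rewrite /= inordK; lia.
  subst ia ib; apply/orP; left; rewrite orbC; exact: H.
Qed.

Lemma Dv_empty k : Dv k k = 1.
Proof.
rewrite /Dv (_ : Iv k k = set0) ?Dm0 //.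
by apply/setP => t; rewrite !inE; lia.
Qed.

Lemma Ddel0 : Dm NG [set~ root ord0] = qq 0 * Dv 1 n.+1.
Proof.
rewrite -Iv_delR //; congr Dm; apply/setP => t.
have -> : (inord 0 : 'I_n.+1) = ord0 by apply/val_inj; rewrite /= inordK.
by rewrite !inE /= ltn_ord andbT.
Qed.

Lemma Ddeln : Dm NG [set~ root ord_max] = Dv 0 n * qq n.
Proof.
rewrite -Iv_delL //; congr Dm; apply/setP => t.
have -> : (inord n : 'I_n.+1) = ord_max by apply/val_inj; rewrite /= inordK.
by rewrite !inE /= ltn_ord andbT.
Qed.

Lemma qq_neq0 k : qq k != 0.
Proof. exact: monic_neq0 (char_poly_monic _). Qed.

Lemma alg_step (R : comNzRingType) (Q Q' q0 q1 c0 c1 P0 P1 Rt Rt1 Lt Lt1 : R) :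
  Q * Rt = Q' * Lt -> Q * q0 * Rt1 = Q' * c1 * Lt1 -> P0 * q1 = P1 * c0 ->
  Q * q0 * q1 * (P0 * Rt1 - c0 * c1 * Rt) = Q' * c1 * c0 * (Lt1 * P1 - q0 * q1 * Lt).
Proof.
move=> H0 H1 H2.
have -> : Q * q0 * q1 * (P0 * Rt1 - c0 * c1 * Rt) =
  (P0 * q1) * (Q * q0 * Rt1) - q0 * q1 * c0 * c1 * (Q * Rt) by ring.
by rewrite H0 H1 H2; ring.
Qed.

Lemma main_alg (Hs : forall k, (k <= n)%N -> pp k * qq (n - k) = pp (n - k) * qq k) :
  qq 0 * Dv 1 n.+1 = Dv 0 n * qq n.
Proof.
pose Q t := \prod_(i < t) qq i.
pose Q' t := \prod_(i < t) qq (n - i).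
have claim : forall t, (t <= n)%N ->
  (forall s, (s + t)%N = n.+1 -> Q t * Dv s n.+1 = Q' t * Dv 0 t) /\
  (forall s, (s + t.+1)%N = n.+1 -> Q t.+1 * Dv s n.+1 = Q' t.+1 * Dv 0 t.+1).
  elim=> [_|t IH tn].
    split=> s Hs'.
      have -> : s = n.+1 by lia.
      by rewrite /Q /Q' !big_ord0 !Dv_empty.
    have -> : s = n by lia.
    rewrite /Q /Q' !big_ord1 subn0 !Dv_one //.
    have := Hs 0 (leq0n n); rewrite subn0 => H.
    by rewrite mulrC -H mulrC.
  have [IH0 IH1] := IH (ltnW tn).
  split; first exact: IH1.
  move=> s Hst.
  rewrite (@Dv_split s s.+1 n.+1) ?Dv_one ?Dv_empty //=; try lia.
  rewrite (@Dv_split 0 t.+1 t.+2) ?Dv_one ?Dv_empty //=; try lia.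
  rewrite /Q /Q' !big_ord_recr /= -/(Q t) -/(Q' t).
  rewrite -/(Q t) -/(Q' t) mul1r mulr1.
  have Hc0 : (n - t.+1)%N = s by lia.
  have Hc1 : (n - t)%N = s.+1 by lia.
  rewrite Hc0 Hc1.
  apply: alg_step.
  - by apply: IH0; lia.
  - by move: (IH1 s.+1 ltac:(lia)); rewrite /Q /Q' !big_ord_recr /= Hc1.
  - by have := Hs t.+1 tn; rewrite Hc0.
have [H _] := claim n (leqnn n).
have {}H := H 1%N (erefl _).
set X := Dv 1 n.+1 in H *; set Y := Dv 0 n in H *.
have EP : Q n * qq n = Q' n * qq 0.
  rewrite /Q /Q'.
  rewrite -(big_ord_recr n (fun i : 'I_n.+1 => qq i)) /=.
  rewrite (_ : qq 0 = qq (n - (@ord_max n))); last by rewrite /= subnn.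
  rewrite -(big_ord_recr n (fun i : 'I_n.+1 => qq (n - i))) /=.
  rewrite -(big_mkord xpredT) big_rev_mkord subn0.
  by apply: eq_bigr => i _; rewrite subSS.
have P0 : Q n * qq n != 0.
  by rewrite mulf_neq0 ?qq_neq0 // prodf_seq_neq0; apply/allP => i _; rewrite qq_neq0.
apply: (mulfI P0).
rewrite {2}EP.
have -> : Q n * qq n * (qq 0 * X) = qq 0 * qq n * (Q n * X) by ring.
rewrite H; ring.
Qed.

End Graph.


Unset Implicit Arguments.
Set Strict Implicit.
Theorem lemma6 (n : nat) (V : 'I_n.+1 -> finType) (e : forall i, rel (V i))
  (r : forall i, V i)
  (He : forall i, simple_graph (e i))
  (Hsym : forall i : 'I_n.+1,
     alpha (e i) (r i) = alpha (e (rev_ord i)) (r (rev_ord i))) :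
  alpha (dpath_rel e r) (existT V ord0 (r ord0))
  = alpha (dpath_rel e r) (existT V ord_max (r ord_max)).
Proof.
rewrite /alpha; congr (_ / FracField.tofrac _).
rewrite !phi_del.
have E0 := Ddel0 _ _ e r; have En := Ddeln _ _ e r; rewrite /root in E0 En.
rewrite E0 En; apply: main_alg => k kn.
have := Hsym (inord k).
have -> : rev_ord (inord k) = inord (n - k) :> 'I_n.+1.
  by apply/val_inj; rewrite /= !inordK; lia.
rewrite /alpha -/(pp _ _ e k) -/(qq _ _ e r k) -/(pp _ _ e (n - k)) -/(qq _ _ e r (n - k)).
move/eqP; rewrite eqr_div ?tofrac_eq0 ?qq_neq0 // -!rmorphM tofrac_eq => /eqP.
done.
Qed.
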